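(* Let $n\ge 2$ and let $a_1,\dots,a_n,b_1,\dots,b_n\in\{-1,+1\}$ be arbitrary. Define $\mathcal{S}_0=\sum_{i=1}^n a_i$, $\mathcal{S}_{00}=\sum_{i\neq j}a_ia_j$, $\mathcal{S}_{11}=\sum_{i\ne j}b_ib_j$, $\mathcal{S}_{01}=\sum_{i\neq j}a_ib_j$ (sums over ordered pairs $(i,j)$ of distinct indices in $\{1,\dots,n\}$). Then $$-2\mathcal{S}_0+\tfrac12\mathcal{S}_{00}-\mathcal{S}_{01}+\tfrac12\mathcal{S}_{11}+2n\ \ge\ 0.$$ Consequently, for every $n$-party local hidden variable model in which each party $i$ has two $\pm1$-valued observables $\mathcal{M}_0^{(i)},\mathcal{M}_1^{(i)}$, the same inequality holds with $\mathcal{S}_k=\sum_i\langle\mathcal{M}_k^{(i)}\rangle$ and $\mathcal{S}_{kl}=\sum_{i\ne j}\langle\mathcal{M}_k^{(i)}\mathcal{M}_l^{(j)}\rangle$.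
   Context: A local hidden variable (classical) model for $n$ parties each with two $\pm1$-valued measurements $k\in\{0,1\}$ is a probability distribution $q_\lambda$ over deterministic assignments $\lambda$ of values $\mathcal{M}_k^{(i)}(\lambda)\in\{\pm1\}$; expectation values are $\langle\prod \mathcal{M}\rangle=\sum_\lambda q_\lambda\prod\mathcal{M}(\lambda)$. Deterministic assignments correspond to $a_i=\mathcal{M}_0^{(i)}(\lambda)$, $b_i=\mathcal{M}_1^{(i)}(\lambda)$. *)

(* Defs.v *)
From HB Require Import structures.
From mathcomp Require Import all_boot all_order all_algebra.
Set Implicit Arguments. Unset Strict Implicit. Unset Printing Implicit Defensive.
Import Order.TTheory GRing.Theory Num.Theory.
Local Open Scope ring_scope.

Definition pm1 {R : ringType} (x : R) : Prop := x = 1 \/ x = -1.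

Definition bell_expr {R : fieldType} (n : nat) (S0 S00 S01 S11 : R) : R :=
  - (2 * S0) + S00 / 2 - S01 + S11 / 2 + 2 * n%:R.

Definition offdiag_sum {R : ringType} (n : nat) (F : 'I_n -> 'I_n -> R) : R :=
  \sum_(i < n) \sum_(j < n | j != i) F i j.

(* Main.v *)
Require Import Defs.
From HB Require Import structures.
From mathcomp Require Import all_boot all_order all_algebra.
From mathcomp Require Import ring lra.
Import Order.TTheory GRing.Theory Num.Theory.
Local Open Scope ring_scope.

Lemma offdiag_prod (R : comRingType) n (f g : 'I_n -> R) :
  offdiag_sum (fun i j => f i * g j) =
  (\sum_(i < n) f i) * (\sum_(j < n) g j) - \sum_(i < n) f i * g i.
Proof.
rewrite /offdiag_sum big_distrl /= -sumrB; apply: eq_bigr => i _.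
by rewrite big_distrr [in RHS](bigD1 i) //= addrAC subrr add0r.
Qed.

Lemma pm1_le1 (R : realFieldType) (x : R) : pm1 x -> x <= 1.
Proof. by case=> ->; lra. Qed.

Lemma pm1_sq (R : realFieldType) (x : R) : pm1 x -> x * x = 1.
Proof. by case=> ->; ring. Qed.

Lemma part1 (R : realFieldType) (n : nat) (a b : 'I_n -> R) :
     (forall i, pm1 (a i)) -> (forall i, pm1 (b i)) ->
     0 <= bell_expr n (\sum_(i < n) a i)
                      (offdiag_sum (fun i j => a i * a j))
                      (offdiag_sum (fun i j => a i * b j))
                      (offdiag_sum (fun i j => b i * b j)).
Proof.
move=> ha hb.
rewrite /bell_expr !offdiag_prod.
have Ea : \sum_(i < n) a i * a i = n%:R.
  by rewrite (eq_bigr (fun=> 1)) ?sumr_const ?card_ord // => i _; rewrite pm1_sq.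
have Eb : \sum_(i < n) b i * b i = n%:R.
  by rewrite (eq_bigr (fun=> 1)) ?sumr_const ?card_ord // => i _; rewrite pm1_sq.
rewrite Ea Eb.
set A := \sum_(i < n) a i. set B := \sum_(i < n) b i.
set C := \sum_(i < n) a i * b i.
have HC : 0 <= n%:R - A - B + C.
  have -> : n%:R - A - B + C = \sum_(i < n) (1 - a i) * (1 - b i).
    have -> : (n%:R : R) = \sum_(i < n) 1 by rewrite sumr_const card_ord.
    rewrite /A /B /C -!sumrB -big_split /=.
    by apply: eq_bigr => i _; ring.
  apply: sumr_ge0 => i _; apply: mulr_ge0; rewrite subr_ge0; exact: pm1_le1.
have [z Hz] : exists z : int, (A - B) / 2 = z%:~R.
  rewrite /A /B -sumrB mulr_suml.
  apply: (big_ind (fun x : R => exists z : int, x = z%:~R)).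
  - by exists 0.
  - by move=> x y [u ->] [v ->]; exists (u + v); rewrite rmorphD.
  - move=> i _; case: (ha i) => ->; case: (hb i) => ->.
    + by exists 0; rewrite subrr mul0r.
    + by exists 1; rewrite /=; field.
    + by exists (-1); rewrite /= rmorphN /=; field.
    + by exists 0; rewrite opprK addNr mul0r.
have Hzz : 0 <= (z%:~R : R) * (z%:~R - 1).
  have : (0 <= z * (z - 1))%R.
    by case: (lerP z 0) => hz; [apply: mulr_le0 => //; lra | apply: mulr_ge0; [exact: ltW | by rewrite subr_ge0 -gtz0_ge1]].
  by rewrite -(ler0z R) rmorphM rmorphB.
have HAB : A - B = 2 * z%:~R by rewrite -Hz; field.
have -> : - (2 * A) + (A * A - n%:R) / 2 - (A * B - C) + (B * B - n%:R) / 2 + 2 * n%:R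
   = (A - B) * (A - B) / 2 - (A - B) + (n%:R - A - B + C) by field.
rewrite HAB.
have -> : 2 * z%:~R * (2 * z%:~R) / 2 - 2 * z%:~R = 2 * ((z%:~R : R) * (z%:~R - 1)) by field.
apply: addr_ge0 => //; apply: mulr_ge0 => //; lra.
Qed.

Lemma bell_lin (R : realFieldType) (n : nat) (Lam : finType) (q x y z w : Lam -> R) :
  \sum_(l : Lam) q l = 1 ->
  bell_expr n (\sum_l q l * x l) (\sum_l q l * y l) (\sum_l q l * z l) (\sum_l q l * w l)
  = \sum_l q l * bell_expr n (x l) (y l) (z l) (w l).
Proof.
move=> Hq.
rewrite [in RHS](eq_bigr (fun l => - (2 * (q l * x l)) + (q l * y l) / 2 - q l * z l
   + (q l * w l) / 2 + 2 * n%:R * q l)); last first.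
    by move=> l _; rewrite /bell_expr; ring.
rewrite !big_split /= !sumrN -!mulr_sumr -!mulr_suml Hq mulr1.
by rewrite /bell_expr.
Qed.

Lemma sum_swap (R : realFieldType) (Lam : finType) (q : Lam -> R) n (F : Lam -> 'I_n -> R) :
  \sum_(i < n) \sum_l q l * F l i = \sum_l q l * \sum_(i < n) F l i.
Proof. by rewrite exchange_big /=; apply: eq_bigr => l _; rewrite mulr_sumr. Qed.

Lemma off_swap (R : realFieldType) (Lam : finType) (q : Lam -> R) n (F : Lam -> 'I_n -> 'I_n -> R) :
  offdiag_sum (fun i j => \sum_l q l * F l i j) = \sum_l q l * offdiag_sum (F l).
Proof.
rewrite /offdiag_sum.
rewrite (eq_bigr (fun i => \sum_l q l * \sum_(j < n | j != i) F l i j)); last first.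
  by move=> i _; rewrite exchange_big /=; apply: eq_bigr => l _; rewrite mulr_sumr.
exact: sum_swap.
Qed.

Theorem mainTheorem2 (R : realFieldType) (n : nat) (hn : (2 <= n)%N) :
  (forall a b : 'I_n -> R,
     (forall i, pm1 (a i)) -> (forall i, pm1 (b i)) ->
     0 <= bell_expr n (\sum_(i < n) a i)
                      (offdiag_sum (fun i j => a i * a j))
                      (offdiag_sum (fun i j => a i * b j))
                      (offdiag_sum (fun i j => b i * b j)))
  /\
  (forall (Lam : finType) (q : Lam -> R) (M : Lam -> 'I_n -> bool -> R),
     (forall l, 0 <= q l) -> \sum_(l : Lam) q l = 1 ->
     (forall l i k, pm1 (M l i k)) ->
     let E1 := fun i k => \sum_(l : Lam) q l * M l i k in
     let E2 := fun i j k k' => \sum_(l : Lam) q l * (M l i k * M l j k') in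
     0 <= bell_expr n (\sum_(i < n) E1 i false)
                      (offdiag_sum (fun i j => E2 i j false false))
                      (offdiag_sum (fun i j => E2 i j false true))
                      (offdiag_sum (fun i j => E2 i j true true))).
Proof.
split; first exact: part1.
move=> Lam q M hq Hq hM; cbv zeta.
rewrite sum_swap.
rewrite (@off_swap R Lam q n (fun l i j => M l i false * M l j false)).
rewrite (@off_swap R Lam q n (fun l i j => M l i false * M l j true)).
rewrite (@off_swap R Lam q n (fun l i j => M l i true * M l j true)).
rewrite bell_lin //.
apply: sumr_ge0 => l _; apply: mulr_ge0 => //.
exact: (@part1 R n (fun i => M l i false) (fun i => M l i true) (fun i => hM l i false) (fun i => hM l i true)).
Qed.
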